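(* Let $f$ be meromorphic on $\mathbb{C}$, not identically zero, and suppose there is $\omega\in\mathbb{C}\setminus\{0\}$ such that for every $t\in\mathbb{R}$ the phase of $f$ is invariant under translation by $t\omega$, i.e. $f(z+t\omega)/|f(z+t\omega)|=f(z)/|f(z)|$ whenever both sides are defined. Then there exist $a,b\in\mathbb{C}$ with $f(z)=\mathrm{e}^{az+b}$ for all $z\in\mathbb{C}$.
   Context: The phase $f(z)/|f(z)|$ is defined at points where $f(z)\in\mathbb{C}\setminus\{0\}$. *)

(* Defs.v *)
From Stdlib Require Import Reals.
Open Scope R_scope.

Definition CC : Type := (R * R)%type.

Definition Cadd (z w : CC) : CC := (fst z + fst w, snd z + snd w).
Definition Csub (z w : CC) : CC := (fst z - fst w, snd z - snd w).
Definition Cmul (z w : CC) : CC :=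
  (fst z * fst w - snd z * snd w, fst z * snd w + snd z * fst w).
Definition Cscal (t : R) (z : CC) : CC := (t * fst z, t * snd z).
Definition Cnorm (z : CC) : R := sqrt (fst z * fst z + snd z * snd z).
Definition C0 : CC := (0, 0).
Definition Cexp (z : CC) : CC := (exp (fst z) * cos (snd z), exp (fst z) * sin (snd z)).
(* phase z / |z| (meaningful for z <> 0) *)
Definition Cphase (z : CC) : CC := Cscal (/ Cnorm z) z.

Definition C_differentiable_at (f : CC -> CC) (z : CC) : Prop :=
  exists l : CC, forall eps, 0 < eps -> exists d, 0 < d /\
    forall h : CC, 0 < Cnorm h < d ->
      Cnorm (Csub (Csub (f (Cadd z h)) (f z)) (Cmul l h)) <= eps * Cnorm h.

(* The values f p for p in P are irrelevant. *)
Definition meromorphic_on_C (f : CC -> CC) (P : CC -> Prop) : Prop :=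
  (forall z, exists r, 0 < r /\ forall w, P w -> w <> z -> r <= Cnorm (Csub w z)) /\
  (forall z, ~ P z -> C_differentiable_at f z) /\
  (forall p, P p -> forall M, exists d, 0 < d /\
     forall w, 0 < Cnorm (Csub w p) < d -> M < Cnorm (f w)).

(* Main.v *)
Require Import Defs.
From Stdlib Require Import Reals Lra Lia Psatz Classical FunctionalExtensionality.
Open Scope R_scope.

Lemma pair_eq (a b : CC) : fst a = fst b -> snd a = snd b -> a = b.
Proof. destruct a, b; simpl; intros; subst; reflexivity. Qed.

Ltac cunf := unfold Cadd, Csub, Cmul, Cscal, C0, Cexp in *; simpl in *.
Ltac ceq := apply pair_eq; cunf; simpl; try ring.

Definition Cinv (z : CC) : CC :=
  (fst z / (fst z * fst z + snd z * snd z), - snd z / (fst z * fst z + snd z * snd z)).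

Lemma nz_sq (z : CC) : z <> C0 -> 0 < fst z * fst z + snd z * snd z.
Proof.
  intros H. destruct z as [x y]; simpl.
  destruct (Req_dec x 0); destruct (Req_dec y 0); subst.
  - exfalso; apply H; reflexivity.
  - nra. - nra. - nra.
Qed.

Lemma Cmul_inv (z : CC) : z <> C0 -> Cmul z (Cinv z) = (1, 0).
Proof.
  intros H. pose proof (nz_sq z H) as Hp. unfold Cinv, Cmul; simpl.
  destruct z as [x y]; simpl in *. apply pair_eq; simpl; field; lra.
Qed.

Lemma Cnorm_nonneg z : 0 <= Cnorm z.
Proof. apply sqrt_pos. Qed.

Lemma Cnorm_sq z : Cnorm z * Cnorm z = fst z * fst z + snd z * snd z.
Proof. unfold Cnorm. apply sqrt_sqrt. nra. Qed.

Lemma Cnorm_pos z : z <> C0 -> 0 < Cnorm z.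
Proof. intros H. apply sqrt_lt_R0. apply nz_sq; auto. Qed.

Lemma Cnorm_eq0 z : Cnorm z = 0 -> z = C0.
Proof.
  intros H. destruct (classic (z = C0)) as [|Hn]; auto.
  pose proof (Cnorm_pos z Hn); lra.
Qed.

Lemma Cnorm_C0 : Cnorm C0 = 0.
Proof. unfold Cnorm, C0; simpl. replace (0*0+0*0) with 0 by ring. apply sqrt_0. Qed.

Lemma sqrt_eq_of_sq a x : 0 <= a -> 0 <= x -> a * a = x -> sqrt x = a.
Proof. intros Ha Hx H. subst. apply sqrt_square; auto. Qed.

Lemma Cnorm_mul a b : Cnorm (Cmul a b) = Cnorm a * Cnorm b.
Proof.
  apply sqrt_eq_of_sq.
  - apply Rmult_le_pos; apply Cnorm_nonneg.
  - unfold Cmul; simpl; nra.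
  - replace (Cnorm a * Cnorm b * (Cnorm a * Cnorm b)) with
      ((Cnorm a * Cnorm a) * (Cnorm b * Cnorm b)) by ring.
    rewrite !Cnorm_sq. unfold Cmul; simpl; ring.
Qed.

Lemma Cnorm_scal t z : Cnorm (Cscal t z) = Rabs t * Cnorm z.
Proof.
  apply sqrt_eq_of_sq.
  - apply Rmult_le_pos; [apply Rabs_pos| apply Cnorm_nonneg].
  - unfold Cscal; simpl; nra.
  - replace (Rabs t * Cnorm z * (Rabs t * Cnorm z)) with
      ((Rabs t * Rabs t) * (Cnorm z * Cnorm z)) by ring.
    rewrite Cnorm_sq, <- Rabs_mult, Rabs_right by nra. unfold Cscal; simpl; ring.
Qed.

Lemma fst_le z : Rabs (fst z) <= Cnorm z.
Proof.
  pose proof (Cnorm_sq z). pose proof (Cnorm_nonneg z).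
  apply Rsqr_incr_0_var; [| auto]. rewrite <- Rsqr_abs. unfold Rsqr. nra.
Qed.

Lemma snd_le z : Rabs (snd z) <= Cnorm z.
Proof.
  pose proof (Cnorm_sq z). pose proof (Cnorm_nonneg z).
  apply Rsqr_incr_0_var; [| auto]. rewrite <- Rsqr_abs. unfold Rsqr. nra.
Qed.

Lemma Cnorm_le_sum z : Cnorm z <= Rabs (fst z) + Rabs (snd z).
Proof.
  pose proof (Cnorm_sq z). pose proof (Cnorm_nonneg z).
  pose proof (Rabs_pos (fst z)). pose proof (Rabs_pos (snd z)).
  apply Rsqr_incr_0_var; [| nra]. unfold Rsqr.
  assert (Rabs (fst z) * Rabs (fst z) = fst z * fst z) by (rewrite <- Rabs_mult; apply Rabs_pos_eq; nra).
  assert (Rabs (snd z) * Rabs (snd z) = snd z * snd z) by (rewrite <- Rabs_mult; apply Rabs_pos_eq; nra).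
  nra.
Qed.

Lemma Cnorm_triangle a b : Cnorm (Cadd a b) <= Cnorm a + Cnorm b.
Proof.
  pose proof (Cnorm_sq a). pose proof (Cnorm_sq b). pose proof (Cnorm_sq (Cadd a b)).
  pose proof (Cnorm_nonneg a). pose proof (Cnorm_nonneg b). pose proof (Cnorm_nonneg (Cadd a b)).
  destruct a as [a1 a2], b as [b1 b2]. unfold Cadd in *; simpl in *.
  set (A := Cnorm (a1,a2)) in *. set (B := Cnorm (b1,b2)) in *.
  set (Sn := Cnorm (a1+b1, a2+b2)) in *. clearbody A B Sn.
  assert (HAB : a1*b1 + a2*b2 <= A*B).
  { assert ((a1*b1+a2*b2)*(a1*b1+a2*b2) <= (A*B)*(A*B)).
    { replace ((A*B)*(A*B)) with ((A*A)*(B*B)) by ring. rewrite H, H0. pose proof (Rle_0_sqr (a1*b2 - a2*b1)); unfold Rsqr in *; nra. }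
    apply Rsqr_incr_0_var; [unfold Rsqr; lra | apply Rmult_le_pos; lra]. }
  apply Rsqr_incr_0_var; [| nra]. unfold Rsqr. nra.
Qed.

Lemma Cnorm_sub_sym a b : Cnorm (Csub a b) = Cnorm (Csub b a).
Proof. unfold Cnorm, Csub; simpl. f_equal. ring. Qed.

Lemma Cnorm_sub_tri a b c : Cnorm (Csub a c) <= Cnorm (Csub a b) + Cnorm (Csub b c).
Proof.
  replace (Csub a c) with (Cadd (Csub a b) (Csub b c)) by ceq.
  apply Cnorm_triangle.
Qed.

Lemma Cnorm_Cexp x : Cnorm (Cexp x) = exp (fst x).
Proof.
  apply sqrt_eq_of_sq.
  - left; apply exp_pos.
  - unfold Cexp; simpl; nra.
  - unfold Cexp; simpl. pose proof (sin2_cos2 (snd x)). unfold Rsqr in H.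
    replace (exp (fst x) * cos (snd x) * (exp (fst x) * cos (snd x)) +
             exp (fst x) * sin (snd x) * (exp (fst x) * sin (snd x)))
      with (exp (fst x) * exp (fst x) * (sin (snd x) * sin (snd x) + cos (snd x) * cos (snd x))) by ring.
    rewrite H; ring.
Qed.

Lemma Cexp_nz x : Cexp x <> C0.
Proof.
  intros H. pose proof (Cnorm_Cexp x). rewrite H, Cnorm_C0 in H0.
  pose proof (exp_pos (fst x)); lra.
Qed.

Lemma Cexp_add x y : Cexp (Cadd x y) = Cmul (Cexp x) (Cexp y).
Proof.
  unfold Cexp, Cadd, Cmul; simpl. rewrite exp_plus, cos_plus, sin_plus.
  apply pair_eq; simpl; ring.
Qed.

Lemma Cexp_0 : Cexp C0 = (1, 0).
Proof. unfold Cexp, C0; simpl. rewrite exp_0, cos_0, sin_0. apply pair_eq; simpl; ring. Qed.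

Lemma Cmul_cancel c x y : c <> C0 -> Cmul c x = Cmul c y -> x = y.
Proof.
  intros Hc H.
  assert (Cmul (Cinv c) (Cmul c x) = Cmul (Cinv c) (Cmul c y)) by (rewrite H; auto).
  pose proof (Cmul_inv c Hc).
  replace x with (Cmul (Cmul c (Cinv c)) x) by (rewrite H1; ceq).
  replace y with (Cmul (Cmul c (Cinv c)) y) by (rewrite H1; ceq).
  revert H0. cunf. intros H0. injection H0; intros; apply pair_eq; simpl; nra.
Qed.

Lemma Cmul_nz a b : a <> C0 -> b <> C0 -> Cmul a b <> C0.
Proof.
  intros Ha Hb H. pose proof (Cnorm_mul a b). rewrite H, Cnorm_C0 in H0.
  pose proof (Cnorm_pos a Ha); pose proof (Cnorm_pos b Hb); nra.
Qed.

Lemma Clog (c : CC) : c <> C0 -> exists b, Cexp b = c.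
Proof.
  intros Hc. pose proof (Cnorm_pos c Hc) as Hp. pose proof (Cnorm_sq c) as Hs.
  set (n := Cnorm c) in *. clearbody n. clear Hc. destruct c as [x y]; simpl in *.
  assert (Hx : -1 <= x / n <= 1).
  { assert (x * x <= n * n) by nra.
    assert (Hxn : x / n * n = x) by (field; lra).
    assert (-n <= x <= n) by (split; nra).
    split; apply (Rmult_le_reg_r n); auto; rewrite Hxn; lra. }
  assert (Hsq : sqrt (1 - (x/n)²) = Rabs (y / n)).
  { assert (E : 1 - x/n*(x/n) = y/n*(y/n)).
    { transitivity ((n*n - x*x)/(n*n)); [field; lra|]. replace (n*n - x*x) with (y*y) by lra. field. lra. }
    unfold Rsqr. rewrite E.
    apply sqrt_eq_of_sq; [apply Rabs_pos | apply Rle_0_sqr |].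
    rewrite <- Rabs_mult. apply Rabs_pos_eq. apply Rle_0_sqr. }
  destruct (Rle_dec 0 y) as [Hy|Hy].
  - exists (ln n, acos (x/n)). unfold Cexp; simpl. rewrite exp_ln by auto.
    rewrite cos_acos by auto. rewrite sin_acos by auto. rewrite Hsq.
    rewrite Rabs_right.
    + apply pair_eq; simpl; field; lra.
    + apply Rle_ge. unfold Rdiv. apply Rmult_le_pos; auto. left; apply Rinv_0_lt_compat; auto.
  - exists (ln n, - acos (x/n)). unfold Cexp; simpl. rewrite exp_ln by auto.
    rewrite cos_neg, sin_neg. rewrite cos_acos by auto. rewrite sin_acos by auto. rewrite Hsq.
    rewrite Rabs_left.
    + apply pair_eq; simpl; field; lra.
    + unfold Rdiv. assert (0 < / n) by (apply Rinv_0_lt_compat; auto). nra.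
Qed.

Definition cder (g : R -> CC) (t : R) (d : CC) : Prop :=
  derivable_pt_lim (fun x => fst (g x)) t (fst d) /\
  derivable_pt_lim (fun x => snd (g x)) t (snd d).

Lemma dpl_eq F t L1 L : derivable_pt_lim F t L1 -> L1 = L -> derivable_pt_lim F t L.
Proof. intros H ->; auto. Qed.

Lemma dpl_local (g h : R -> R) t l d : 0 < d ->
  (forall x, Rabs (x - t) < d -> g x = h x) ->
  derivable_pt_lim g t l -> derivable_pt_lim h t l.
Proof.
  intros Hd Heq H eps Heps. destruct (H eps Heps) as [del Hdel].
  assert (Hm : 0 < Rmin del d) by (apply Rmin_pos; [apply cond_pos| auto]).
  exists (mkposreal _ Hm). intros hh Hh Hlt. simpl in Hlt.
  assert (E1 : g (t + hh) = h (t + hh)).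
  { apply Heq. replace (t + hh - t) with hh by ring. pose proof (Rmin_r del d); lra. }
  assert (E2 : g t = h t).
  { apply Heq. replace (t - t) with 0 by ring. rewrite Rabs_R0; auto. }
  rewrite <- E1, <- E2. apply Hdel; auto. pose proof (Rmin_l del d); lra.
Qed.

Lemma dpl_local_zero g t l d : 0 < d ->
  (forall x, Rabs (x - t) < d -> g x = 0) -> derivable_pt_lim g t l -> l = 0.
Proof.
  intros Hd Heq H.
  assert (H2 : derivable_pt_lim (fct_cte 0) t l).
  { apply (dpl_local g _ t l d); auto. }
  apply (uniqueness_limite (fct_cte 0) t); auto. apply derivable_pt_lim_const.
Qed.

Lemma cder_unique g t d1 d2 : cder g t d1 -> cder g t d2 -> d1 = d2.
Proof.
  intros [H1 H2] [H3 H4]. apply pair_eq.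
  - eapply uniqueness_limite; eauto.
  - eapply uniqueness_limite; eauto.
Qed.

Lemma cder_local (g h : R -> CC) t l d : 0 < d ->
  (forall x, Rabs (x - t) < d -> g x = h x) -> cder g t l -> cder h t l.
Proof.
  intros Hd Heq [H1 H2]. split.
  - apply (dpl_local (fun x => fst (g x)) _ t _ d); auto. intros; rewrite Heq; auto.
  - apply (dpl_local (fun x => snd (g x)) _ t _ d); auto. intros; rewrite Heq; auto.
Qed.

Lemma cder_mul g h t d e : cder g t d -> cder h t e ->
  cder (fun x => Cmul (g x) (h x)) t (Cadd (Cmul d (h t)) (Cmul (g t) e)).
Proof.
  intros [G1 G2] [H1 H2]. split.
  - eapply dpl_eq.
    + change (fun x => fst (Cmul (g x) (h x))) with
        (mult_fct (fun x => fst (g x)) (fun x => fst (h x)) -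
         mult_fct (fun x => snd (g x)) (fun x => snd (h x)))%F.
      apply derivable_pt_lim_minus; apply derivable_pt_lim_mult; eauto.
    + cunf. ring.
  - eapply dpl_eq.
    + change (fun x => snd (Cmul (g x) (h x))) with
        (mult_fct (fun x => fst (g x)) (fun x => snd (h x)) +
         mult_fct (fun x => snd (g x)) (fun x => fst (h x)))%F.
      apply derivable_pt_lim_plus; apply derivable_pt_lim_mult; eauto.
    + cunf. ring.
Qed.

Lemma cder_const (c : CC) t : cder (fun _ => c) t C0.
Proof. split; apply derivable_pt_lim_const. Qed.

Lemma cder_cmul (c : CC) g t d : cder g t d -> cder (fun x => Cmul c (g x)) t (Cmul c d).
Proof.
  intros H. pose proof (cder_mul (fun _ => c) g t C0 d (cder_const c t) H) as H2.
  replace (Cmul c d) with (Cadd (Cmul C0 (g t)) (Cmul c d)) by ceq. exact H2.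
Qed.

Lemma dpl_lin k t : derivable_pt_lim (fun x => x * k) t k.
Proof.
  eapply dpl_eq.
  - change (fun x => x * k) with (mult_fct id (fct_cte k)).
    apply derivable_pt_lim_mult; [apply derivable_pt_lim_id | apply derivable_pt_lim_const].
  - unfold fct_cte, id; ring.
Qed.

Lemma dpl_explin k t : derivable_pt_lim (fun x => exp (x * k)) t (k * exp (t * k)).
Proof.
  eapply dpl_eq.
  - change (fun x => exp (x * k)) with (comp exp (fun x => x * k)).
    apply derivable_pt_lim_comp; [apply dpl_lin | apply derivable_pt_lim_exp].
  - ring.
Qed.

Lemma dpl_coslin k t : derivable_pt_lim (fun x => cos (x * k)) t (- k * sin (t * k)).
Proof.
  eapply dpl_eq.
  - change (fun x => cos (x * k)) with (comp cos (fun x => x * k)).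
    apply derivable_pt_lim_comp; [apply dpl_lin | apply derivable_pt_lim_cos].
  - ring.
Qed.

Lemma dpl_sinlin k t : derivable_pt_lim (fun x => sin (x * k)) t (k * cos (t * k)).
Proof.
  eapply dpl_eq.
  - change (fun x => sin (x * k)) with (comp sin (fun x => x * k)).
    apply derivable_pt_lim_comp; [apply dpl_lin | apply derivable_pt_lim_sin].
  - ring.
Qed.

Lemma cder_exp (k : CC) t : cder (fun x => Cexp (Cscal x k)) t (Cmul k (Cexp (Cscal t k))).
Proof.
  split.
  - eapply dpl_eq.
    + change (fun x => fst (Cexp (Cscal x k))) with
        (mult_fct (fun x => exp (x * fst k)) (fun x => cos (x * snd k))).
      apply derivable_pt_lim_mult; [apply dpl_explin | apply dpl_coslin].
    + cunf. ring.
  - eapply dpl_eq.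
    + change (fun x => snd (Cexp (Cscal x k))) with
        (mult_fct (fun x => exp (x * fst k)) (fun x => sin (x * snd k))).
      apply derivable_pt_lim_mult; [apply dpl_explin | apply dpl_sinlin].
    + cunf. ring.
Qed.

Definition has_cd (f : CC -> CC) v l := forall eps, 0 < eps -> exists d, 0 < d /\
    forall h : CC, 0 < Cnorm h < d ->
      Cnorm (Csub (Csub (f (Cadd v h)) (f v)) (Cmul l h)) <= eps * Cnorm h.

Lemma dir_proj (pr : CC -> R) f v l d t0 :
  (forall a b, pr (Csub a b) = pr a - pr b) ->
  (forall h, pr (Cmul l (Cscal h d)) = h * pr (Cmul l d)) ->
  (forall z, Rabs (pr z) <= Cnorm z) ->
  has_cd f v l -> d <> C0 ->
  derivable_pt_lim (fun x => pr (f (Cadd v (Cscal (x - t0) d)))) t0 (pr (Cmul l d)).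
Proof.
  intros Hsub Hlin Hb Hcd Hd eps Heps.
  pose proof (Cnorm_pos d Hd) as Hnd. set (nd := Cnorm d) in *.
  assert (He : 0 < eps / (2 * nd)) by (apply Rdiv_lt_0_compat; lra).
  destruct (Hcd _ He) as [del [Hdel Hh]].
  assert (Hdp : 0 < del / nd) by (apply Rdiv_lt_0_compat; lra).
  exists (mkposreal _ Hdp). intros h Hh0 Hhl. simpl in Hhl.
  replace (Cadd v (Cscal (t0 + h - t0) d)) with (Cadd v (Cscal h d))
    by (f_equal; f_equal; ring).
  replace (Cadd v (Cscal (t0 - t0) d)) with v by (destruct v; ceq).
  set (W := Csub (Csub (f (Cadd v (Cscal h d))) (f v)) (Cmul l (Cscal h d))).
  assert (HnW : Cnorm (Cscal h d) = Rabs h * nd) by apply Cnorm_scal.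
  assert (Hah : 0 < Rabs h) by (apply Rabs_pos_lt; auto).
  assert (HW : Cnorm W <= eps / (2 * nd) * Cnorm (Cscal h d)).
  { apply Hh. rewrite HnW. split; [nra|].
    apply (Rmult_lt_compat_r nd) in Hhl; auto.
    replace (del / nd * nd) with del in Hhl by (field; lra). lra. }
  assert (HpW : pr W = pr (f (Cadd v (Cscal h d))) - pr (f v) - h * pr (Cmul l d)).
  { unfold W. rewrite !Hsub, Hlin. ring. }
  replace ((pr (f (Cadd v (Cscal h d))) - pr (f v)) / h - pr (Cmul l d)) with (pr W / h)
    by (rewrite HpW; field; auto).
  unfold Rdiv. rewrite Rabs_mult, Rabs_inv.
  pose proof (Hb W).
  rewrite HnW in HW.
  replace (eps / (2 * nd) * (Rabs h * nd)) with (eps / 2 * Rabs h) in HW by (field; lra).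
  apply (Rmult_lt_reg_r (Rabs h)); auto.
  rewrite Rmult_assoc, Rinv_l by lra. nra.
Qed.

Lemma dir_deriv f v l d t0 : has_cd f v l -> d <> C0 ->
  cder (fun x => f (Cadd v (Cscal (x - t0) d))) t0 (Cmul l d).
Proof.
  intros H Hd. split.
  - apply (dir_proj fst); auto; try (intros; cunf; ring). apply fst_le.
  - apply (dir_proj snd); auto; try (intros; cunf; ring). apply snd_le.
Qed.

Lemma cd_cont f v l : has_cd f v l -> forall eps, 0 < eps -> exists d, 0 < d /\
  forall u, Cnorm (Csub u v) < d -> Cnorm (Csub (f u) (f v)) < eps.
Proof.
  intros H eps Heps.
  destruct (H 1 Rlt_0_1) as [del [Hdel Hh]].
  remember (Cnorm l + 1) as M eqn:HMd.
  assert (HM : 0 < M) by (pose proof (Cnorm_nonneg l); lra).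
  assert (Hd2 : 0 < Rmin del (eps / M)) by (apply Rmin_pos; auto; apply Rdiv_lt_0_compat; auto).
  exists (Rmin del (eps / M)). split; auto. intros u Hu.
  destruct (Req_dec (Cnorm (Csub u v)) 0) as [H0|H0].
  - apply Cnorm_eq0 in H0. replace u with v by (destruct u, v; cunf; injection H0; intros; apply pair_eq; simpl; lra).
    replace (Csub (f v) (f v)) with C0 by ceq. rewrite Cnorm_C0; auto.
  - remember (Csub u v) as h eqn:Hhd.
    assert (Hu' : u = Cadd v h) by (subst h; destruct u, v; ceq).
    pose proof (Cnorm_nonneg h).
    assert (Hh1 : Cnorm (Csub (Csub (f (Cadd v h)) (f v)) (Cmul l h)) <= 1 * Cnorm h).
    { apply Hh. split; [lra|]. pose proof (Rmin_l del (eps/M)). lra. }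
    rewrite <- Hu' in Hh1.
    replace (Csub (f u) (f v)) with (Cadd (Csub (Csub (f u) (f v)) (Cmul l h)) (Cmul l h)) by ceq.
    eapply Rle_lt_trans; [apply Cnorm_triangle|]. rewrite Cnorm_mul.
    assert (Cnorm h < eps / M) by (pose proof (Rmin_r del (eps/M)); lra).
    assert (Cnorm h * M < eps).
    { apply (Rmult_lt_compat_r M) in H2; auto. replace (eps / M * M) with eps in H2 by (field; lra). auto. }
    pose proof (Cnorm_nonneg l). nra.
Qed.

Lemma const_of_zero_deriv (g : R -> R) rho :
  (forall x, Rabs x < rho -> derivable_pt_lim g x 0) ->
  forall x, Rabs x < rho -> g x = g 0.
Proof.
  intros H x Hx.
  destruct (Rtotal_order x 0) as [Hlt|[Heq|Hgt]].
  - destruct (MVT_cor2 g (fun _ => 0) x 0 Hlt) as [c [Hc _]].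
    + intros c Hc. apply H. apply Rabs_def1; apply Rabs_def2 in Hx; lra.
    + lra.
  - subst; auto.
  - destruct (MVT_cor2 g (fun _ => 0) 0 x Hgt) as [c [Hc _]].
    + intros c Hc. apply H. apply Rabs_def1; apply Rabs_def2 in Hx; lra.
    + lra.
Qed.

Lemma cder_const_of_zero (g : R -> CC) rho :
  (forall x, Rabs x < rho -> cder g x C0) ->
  forall x, Rabs x < rho -> g x = g 0.
Proof.
  intros H x Hx. apply pair_eq.
  - apply (const_of_zero_deriv (fun y => fst (g y)) rho); auto.
    intros y Hy; apply (H y Hy).
  - apply (const_of_zero_deriv (fun y => snd (g y)) rho); auto.
    intros y Hy; apply (H y Hy).
Qed.

Lemma ode_exp (A : R -> CC) (k : CC) rho :
  (forall t, Rabs t < rho -> cder A t (Cmul k (A t))) ->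
  forall t, Rabs t < rho -> A t = Cmul (A 0) (Cexp (Cscal t k)).
Proof.
  intros H t Ht.
  set (k' := Cscal (-1) k).
  set (D := fun x => Cmul (A x) (Cexp (Cscal x k'))).
  assert (HD : forall x, Rabs x < rho -> cder D x C0).
  { intros x Hx. unfold D.
    pose proof (cder_mul A (fun y => Cexp (Cscal y k')) x _ _ (H x Hx) (cder_exp k' x)) as H2.
    replace C0 with (Cadd (Cmul (Cmul k (A x)) (Cexp (Cscal x k')))
                          (Cmul (A x) (Cmul k' (Cexp (Cscal x k'))))).
    - exact H2.
    - unfold k'. ceq. }
  pose proof (cder_const_of_zero D rho HD t Ht) as E.
  unfold D in E.
  replace (Cexp (Cscal 0 k')) with (1, 0) in E
    by (rewrite <- Cexp_0; f_equal; ceq).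
  assert (E2 : Cmul (Cexp (Cscal t k')) (Cexp (Cscal t k)) = (1, 0)).
  { rewrite <- Cexp_add, <- Cexp_0. f_equal. unfold k'. ceq. }
  transitivity (Cmul (Cmul (A t) (Cexp (Cscal t k'))) (Cexp (Cscal t k))).
  - replace (Cmul (Cmul (A t) (Cexp (Cscal t k'))) (Cexp (Cscal t k)))
      with (Cmul (A t) (Cmul (Cexp (Cscal t k')) (Cexp (Cscal t k)))) by ceq.
    rewrite E2. ceq.
  - rewrite E. ceq.
Qed.

Lemma phase_lemma a b : a <> C0 -> b <> C0 -> Cphase a = Cphase b ->
  a = Cscal (Cnorm a / Cnorm b) b.
Proof.
  intros Ha Hb H. pose proof (Cnorm_pos a Ha) as Pa. pose proof (Cnorm_pos b Hb) as Pb.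
  unfold Cphase, Cscal in H. injection H; intros H1 H2. clear H.
  apply pair_eq; unfold Cscal; simpl.
  - apply (Rmult_eq_reg_l (/ Cnorm a)); [| apply Rinv_neq_0_compat; lra].
    rewrite H2. field. lra.
  - apply (Rmult_eq_reg_l (/ Cnorm a)); [| apply Rinv_neq_0_compat; lra].
    rewrite H1. field. lra.
Qed.

Lemma phase_cross a b : a <> C0 -> b <> C0 -> Cphase a = Cphase b ->
  fst b * snd a - snd b * fst a = 0.
Proof.
  intros Ha Hb H. rewrite (phase_lemma a b Ha Hb H). unfold Cscal; simpl. ring.
Qed.

Lemma Cnorm_Cinv w : w <> C0 -> Cnorm (Cinv w) = / Cnorm w.
Proof.
  intros H. pose proof (Cnorm_mul w (Cinv w)). rewrite Cmul_inv in H0 by auto.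
  assert (Cnorm (1,0) = 1).
  { apply sqrt_eq_of_sq; simpl; lra. }
  rewrite H1 in H0. pose proof (Cnorm_pos w H).
  apply (Rmult_eq_reg_l (Cnorm w)); [|lra]. rewrite <- H0. field. lra.
Qed.

Definition PhaseHyp (f : CC -> CC) (P : CC -> Prop) (omega : CC) : Prop :=
  forall (t : R) (z : CC), ~ P z -> f z <> C0 ->
     ~ P (Cadd z (Cscal t omega)) -> f (Cadd z (Cscal t omega)) <> C0 ->
     Cphase (f (Cadd z (Cscal t omega))) = Cphase (f z).

Definition Fz (f : CC -> CC) z omega t s := f (Cadd z (Cmul (t, s) omega)).

Lemma i_nz : ((0, 1) : CC) <> C0.
Proof. intros H. injection H; lra. Qed.

Lemma local_exp f P omega z r :
  (forall u, ~ P u -> C_differentiable_at f u) ->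
  PhaseHyp f P omega -> omega <> C0 -> 0 < r ->
  (forall u, Cnorm (Csub u z) < r -> ~ P u /\ f u <> C0) ->
  exists a, forall u, Cnorm (Csub u z) < r / 2 ->
    f u = Cmul (f z) (Cexp (Cmul a (Csub u z))).
Proof.
  intros Hdiff Hph Hw Hr HU.
  pose proof (Cnorm_pos omega Hw) as Hnw.
  remember (r / (2 * Cnorm omega)) as rho eqn:Hrhod.
  assert (Hrho : 0 < rho) by (rewrite Hrhod; apply Rdiv_lt_0_compat; lra).
  assert (L1 : forall t s, Rabs t < rho -> Rabs s < rho ->
            ~ P (Cadd z (Cmul (t,s) omega)) /\ Fz f z omega t s <> C0).
  { intros t s Ht Hs. apply HU.
    replace (Csub (Cadd z (Cmul (t, s) omega)) z) with (Cmul (t,s) omega) by (destruct z; ceq).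
    rewrite Cnorm_mul. pose proof (Cnorm_le_sum (t,s)) as H. simpl in H.
    assert (H0 : Cnorm (t,s) < 2 * rho) by lra.
    apply (Rmult_lt_compat_r (Cnorm omega)) in H0; auto.
    replace (2 * rho * Cnorm omega) with r in H0 by (rewrite Hrhod; field; lra). auto. }
  assert (L2 : forall t0 s0, Rabs t0 < rho -> Rabs s0 < rho -> exists l,
     cder (fun x => Fz f z omega x s0) t0 (Cmul l omega) /\
     cder (fun x => Fz f z omega t0 x) s0 (Cmul l (Cmul (0,1) omega))).
  { intros t0 s0 Ht Hs. destruct (L1 t0 s0 Ht Hs) as [Hnp _].
    destruct (Hdiff _ Hnp) as [l Hl]. exists l. split.
    - replace (fun x => Fz f z omega x s0) with
        (fun x => f (Cadd (Cadd z (Cmul (t0,s0) omega)) (Cscal (x - t0) omega))).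
      + apply dir_deriv; [exact Hl | auto].
      + apply functional_extensionality; intros x. unfold Fz. f_equal. destruct z; ceq.
    - replace (fun x => Fz f z omega t0 x) with
        (fun x => f (Cadd (Cadd z (Cmul (t0,s0) omega)) (Cscal (x - s0) (Cmul (0,1) omega)))).
      + apply dir_deriv; [exact Hl | apply Cmul_nz; auto; apply i_nz].
      + apply functional_extensionality; intros x. unfold Fz. f_equal. destruct z; ceq. }
  assert (Lph : forall t s, Rabs t < rho -> Rabs s < rho ->
     Cphase (Fz f z omega t s) = Cphase (Fz f z omega 0 s)).
  { intros t s Ht Hs.
    destruct (L1 t s Ht Hs) as [Hp1 Hn1].
    destruct (L1 0 s) as [Hp3 Hn3]; [rewrite Rabs_R0; lra | auto |].
    pose proof (Hph t (Cadd z (Cmul (0,s) omega)) Hp3 Hn3) as Hq.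
    replace (Cadd (Cadd z (Cmul (0, s) omega)) (Cscal t omega)) with (Cadd z (Cmul (t,s) omega)) in Hq
      by (destruct z; ceq).
    apply Hq; auto. }
  assert (L3 : forall t0 s0 D, Rabs t0 < rho -> Rabs s0 < rho ->
     cder (fun x => Fz f z omega x s0) t0 D ->
     fst (Fz f z omega t0 s0) * snd D - snd (Fz f z omega t0 s0) * fst D = 0).
  { intros t0 s0 D Ht Hs [HD1 HD2].
    apply (dpl_local_zero (fun x => fst (Fz f z omega t0 s0) * snd (Fz f z omega x s0)
                                   - snd (Fz f z omega t0 s0) * fst (Fz f z omega x s0)) t0
       (fst (Fz f z omega t0 s0) * snd D - snd (Fz f z omega t0 s0) * fst D) (rho - Rabs t0)).
    - lra.
    - intros x Hx.
      assert (Hx' : Rabs x < rho).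
      { pose proof (Rabs_triang (x - t0) t0) as H. replace (x - t0 + t0) with x in H by ring. lra. }
      destruct (L1 x s0 Hx' Hs) as [Hp1 Hn1]. destruct (L1 t0 s0 Ht Hs) as [Hp2 Hn2].
      apply (phase_cross (Fz f z omega x s0) (Fz f z omega t0 s0)); auto.
      rewrite (Lph x s0), (Lph t0 s0); auto.
    - eapply (dpl_eq (mult_real_fct (fst (Fz f z omega t0 s0)) (fun x => snd (Fz f z omega x s0)) -
                     mult_real_fct (snd (Fz f z omega t0 s0)) (fun x => fst (Fz f z omega x s0)))%F).
      + apply derivable_pt_lim_minus; apply derivable_pt_lim_scal; eassumption.
      + reflexivity. }
  assert (L4 : forall t s, Rabs t < rho -> Rabs s < rho ->
     Cnorm (Fz f z omega t s) = Cnorm (Fz f z omega t 0)).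
  { intros t s Ht Hs. unfold Cnorm. f_equal.
    apply (const_of_zero_deriv (fun y => fst (Fz f z omega t y) * fst (Fz f z omega t y)
                                       + snd (Fz f z omega t y) * snd (Fz f z omega t y)) rho); auto.
    intros y Hy. destruct (L2 t y Ht Hy) as [l [Hdt [Hds1 Hds2]]].
    pose proof (L3 t y _ Ht Hy Hdt) as Hc.
    eapply (dpl_eq (mult_fct (fun y0 => fst (Fz f z omega t y0)) (fun y0 => fst (Fz f z omega t y0)) +
                   mult_fct (fun y0 => snd (Fz f z omega t y0)) (fun y0 => snd (Fz f z omega t y0)))%F).
    - apply derivable_pt_lim_plus; apply derivable_pt_lim_mult; eassumption.
    - transitivity (-2 * (fst (Fz f z omega t y) * snd (Cmul l omega) - snd (Fz f z omega t y) * fst (Cmul l omega))).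
      + cunf. ring.
      + rewrite Hc. ring. }
  assert (L5 : forall t s, Rabs t < rho -> Rabs s < rho ->
     Cmul (Fz f z omega t s) (Fz f z omega 0 0) = Cmul (Fz f z omega t 0) (Fz f z omega 0 s)).
  { intros t s Ht Hs.
    assert (H0 : Rabs 0 < rho) by (rewrite Rabs_R0; lra).
    destruct (L1 t s Ht Hs) as [_ N1]. destruct (L1 0 s H0 Hs) as [_ N2].
    destruct (L1 t 0 Ht H0) as [_ N3]. destruct (L1 0 0 H0 H0) as [_ N4].
    pose proof (phase_lemma _ _ N1 N2 (Lph t s Ht Hs)) as HA.
    pose proof (phase_lemma _ _ N3 N4 (Lph t 0 Ht H0)) as HB.
    rewrite (L4 t s Ht Hs), (L4 0 s H0 Hs) in HA.
    set (k := Cnorm (Fz f z omega t 0) / Cnorm (Fz f z omega 0 0)) in *. clearbody k.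
    rewrite HA, HB. ceq. }
  assert (H0 : Rabs 0 < rho) by (rewrite Rabs_R0; lra).
  destruct (L1 0 0 H0 H0) as [_ N00].
  destruct (L2 0 0 H0 H0) as [l0 [HA0 HB0]].
  remember (Cmul (Cmul l0 omega) (Cinv (Fz f z omega 0 0))) as kap eqn:Hkap.
  assert (L5' : forall t s, Rabs t < rho -> Rabs s < rho ->
     Fz f z omega t s = Cmul (Cmul (Fz f z omega t 0) (Cinv (Fz f z omega 0 0))) (Fz f z omega 0 s)).
  { intros t s Ht Hs. apply (Cmul_cancel (Fz f z omega 0 0)); auto.
    transitivity (Cmul (Fz f z omega t s) (Fz f z omega 0 0)); [ceq|].
    rewrite L5 by auto.
    transitivity (Cmul (Cmul (Fz f z omega 0 0) (Cinv (Fz f z omega 0 0)))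
                       (Cmul (Fz f z omega t 0) (Fz f z omega 0 s))); [| ceq].
    rewrite Cmul_inv by auto. ceq. }
  assert (L6 : forall t, Rabs t < rho ->
     cder (fun x => Fz f z omega x 0) t (Cmul kap (Fz f z omega t 0))).
  { intros t Ht. destruct (L2 t 0 Ht H0) as [lt [HAt HBt]].
    assert (Hb : cder (fun x => Fz f z omega t x) 0
       (Cmul (Cmul (Fz f z omega t 0) (Cinv (Fz f z omega 0 0))) (Cmul l0 (Cmul (0,1) omega)))).
    { apply (cder_local (fun x => Cmul (Cmul (Fz f z omega t 0) (Cinv (Fz f z omega 0 0))) (Fz f z omega 0 x)) _ 0 _ rho); auto.
      - intros x Hx. rewrite Rminus_0_r in Hx. symmetry. apply L5'; auto.
      - apply cder_cmul. exact HB0. }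
    pose proof (cder_unique _ _ _ _ HBt Hb) as Hu.
    replace (Cmul kap (Fz f z omega t 0)) with (Cmul lt omega); auto.
    apply (Cmul_cancel (0,1)); [apply i_nz|].
    transitivity (Cmul lt (Cmul (0,1) omega)); [ceq|]. rewrite Hu. subst kap. ceq. }
  assert (L7 : forall s, Rabs s < rho ->
     cder (fun x => Fz f z omega 0 x) s (Cmul (Cmul (0,1) kap) (Fz f z omega 0 s))).
  { intros s Hs. destruct (L2 0 s H0 Hs) as [ls [HAs HBs]].
    assert (Ha : cder (fun x => Fz f z omega x s) 0
       (Cmul (Cmul (Fz f z omega 0 s) (Cinv (Fz f z omega 0 0))) (Cmul l0 omega))).
    { apply (cder_local (fun x => Cmul (Cmul (Fz f z omega 0 s) (Cinv (Fz f z omega 0 0))) (Fz f z omega x 0)) _ 0 _ rho); auto.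
      - intros x Hx. rewrite Rminus_0_r in Hx. rewrite (L5' x s) by auto. ceq.
      - apply cder_cmul. exact HA0. }
    pose proof (cder_unique _ _ _ _ HAs Ha) as Hu.
    replace (Cmul (Cmul (0,1) kap) (Fz f z omega 0 s)) with (Cmul ls (Cmul (0,1) omega)); auto.
    transitivity (Cmul (0,1) (Cmul ls omega)); [ceq|]. rewrite Hu. subst kap. ceq. }
  assert (HAt : forall t, Rabs t < rho ->
     Fz f z omega t 0 = Cmul (Fz f z omega 0 0) (Cexp (Cscal t kap))).
  { intros t Ht. exact (ode_exp (fun x => Fz f z omega x 0) kap rho L6 t Ht). }
  assert (HBs : forall s, Rabs s < rho ->
     Fz f z omega 0 s = Cmul (Fz f z omega 0 0) (Cexp (Cscal s (Cmul (0,1) kap)))).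
  { intros s Hs. exact (ode_exp (fun x => Fz f z omega 0 x) _ rho L7 s Hs). }
  assert (Hloc : forall t s, Rabs t < rho -> Rabs s < rho ->
     Fz f z omega t s = Cmul (Fz f z omega 0 0) (Cexp (Cmul kap (t, s)))).
  { intros t s Ht Hs. rewrite (L5' t s Ht Hs), (HAt t Ht), (HBs s Hs).
    replace (Cmul kap (t, s)) with (Cadd (Cscal t kap) (Cscal s (Cmul (0,1) kap))) by ceq.
    rewrite Cexp_add.
    transitivity (Cmul (Cmul (Fz f z omega 0 0) (Cinv (Fz f z omega 0 0)))
       (Cmul (Fz f z omega 0 0) (Cmul (Cexp (Cscal t kap)) (Cexp (Cscal s (Cmul (0, 1) kap)))))); [ceq|].
    rewrite Cmul_inv by auto. ceq. }
  exists (Cmul kap (Cinv omega)). intros u Hu.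
  remember (Cmul (Csub u z) (Cinv omega)) as tau eqn:Htaud.
  assert (Htau : Cnorm tau < rho).
  { rewrite Htaud, Cnorm_mul, Cnorm_Cinv by auto. rewrite Hrhod.
    replace (r / (2 * Cnorm omega)) with (r / 2 * / Cnorm omega) by (field; lra).
    apply Rmult_lt_compat_r; [apply Rinv_0_lt_compat; auto | auto]. }
  pose proof (fst_le tau). pose proof (snd_le tau).
  assert (Hu_eq : u = Cadd z (Cmul (fst tau, snd tau) omega)).
  { rewrite <- surjective_pairing. rewrite Htaud.
    transitivity (Cadd z (Cmul (Csub u z) (Cmul omega (Cinv omega)))).
    - rewrite Cmul_inv by auto. destruct u, z; ceq.
    - ceq. }
  transitivity (Fz f z omega (fst tau) (snd tau)); [unfold Fz; rewrite <- Hu_eq; reflexivity|].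
  rewrite Hloc by lra.
  replace (Fz f z omega 0 0) with (f z) by (unfold Fz; f_equal; destruct z; ceq).
  rewrite <- surjective_pairing. f_equal. f_equal. rewrite Htaud. ceq.
Qed.

Lemma Csub_C0 x : Csub x C0 = x.
Proof. destruct x; ceq. Qed.

Lemma Csub_self x : Csub x x = C0.
Proof. destruct x; ceq. Qed.

Lemma openU f P z :
  (forall z, exists r, 0 < r /\ forall w, P w -> w <> z -> r <= Cnorm (Csub w z)) ->
  (forall z, ~ P z -> C_differentiable_at f z) ->
  ~ P z -> f z <> C0 ->
  exists r, 0 < r /\ forall u, Cnorm (Csub u z) < r -> ~ P u /\ f u <> C0.
Proof.
  intros Hdisc Hdiff Hp Hf.
  destruct (Hdisc z) as [r1 [Hr1 Hd]].
  destruct (Hdiff z Hp) as [l Hl].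
  pose proof (Cnorm_pos _ Hf) as Hfp.
  destruct (cd_cont f z l Hl (Cnorm (f z)) Hfp) as [del [Hdel Hc]].
  exists (Rmin r1 del). split; [apply Rmin_pos; auto|].
  intros u Hu. pose proof (Rmin_l r1 del). pose proof (Rmin_r r1 del). split.
  - intros HPu. assert (u <> z) by (intros ->; auto).
    pose proof (Hd u HPu H1). lra.
  - intros Hf0. pose proof (Hc u ltac:(lra)) as Hc'. rewrite Hf0 in Hc'.
    rewrite Cnorm_sub_sym, Csub_C0 in Hc'. lra.
Qed.

Lemma exp_le a b : a <= b -> exp a <= exp b.
Proof. intros [H|H]; [left; apply exp_increasing; auto | subst; lra]. Qed.

Lemma Cnorm_real x : Cnorm (x, 0) = Rabs x.
Proof.
  apply sqrt_eq_of_sq; [apply Rabs_pos | simpl; nra |].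
  rewrite <- Rabs_mult. simpl. rewrite Rabs_pos_eq; nra.
Qed.

Lemma exp_unique (dl : CC) e : 0 < e ->
  (forall v, Cnorm v < e -> Cexp (Cmul dl v) = (1, 0)) -> dl = C0.
Proof.
  intros He H. destruct dl as [d1 d2].
  assert (K : forall x, 0 < x < e -> d1 * x = 0 /\ sin (d2 * x) = 0).
  { intros x Hx. assert (Hn : Cnorm (x,0) < e) by (rewrite Cnorm_real, Rabs_pos_eq; lra).
    pose proof (H _ Hn) as Hq.
    replace (Cmul (d1, d2) (x, 0)) with (d1 * x, d2 * x) in Hq by ceq.
    unfold Cexp in Hq; simpl in Hq. injection Hq; intros Hs Hc. clear Hq.
    pose proof (exp_pos (d1 * x)) as Hp.
    assert (Hs0 : sin (d2 * x) = 0).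
    { apply (Rmult_eq_reg_l (exp (d1 * x))); lra. }
    pose proof (sin2_cos2 (d2 * x)) as Hsc. unfold Rsqr in Hsc. rewrite Hs0 in Hsc.
    assert (Hcc : cos (d2 * x) * cos (d2 * x) = 1) by lra.
    assert (Hee : exp (d1 * x) * exp (d1 * x) = 1).
    { replace 1 with ((exp (d1 * x) * cos (d2 * x)) * (exp (d1 * x) * cos (d2 * x))) by (rewrite Hc; ring).
      transitivity (exp (d1 * x) * exp (d1 * x) * (cos (d2 * x) * cos (d2 * x))); [rewrite Hcc; ring | ring]. }
    assert (He1 : exp (d1 * x) = 1) by nra.
    split; auto. rewrite <- (ln_exp (d1 * x)), He1. apply ln_1. }
  destruct (K (e/2) ltac:(lra)) as [K1 _].
  assert (Hd1 : d1 = 0) by (apply (Rmult_eq_reg_r (e/2)); lra).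
  subst d1.
  destruct (Req_dec d2 0) as [Hd2|Hd2]; [subst; reflexivity|].
  exfalso.
  pose proof PI_RGT_0 as Hpi.
  pose proof (Rabs_pos_lt d2 Hd2) as Ha.
  set (x := Rmin (e/2) (PI / (2 * Rabs d2))).
  assert (Hx0 : 0 < x) by (unfold x; apply Rmin_pos; [lra | apply Rdiv_lt_0_compat; lra]).
  assert (Hxe : x < e) by (unfold x; pose proof (Rmin_l (e/2) (PI / (2 * Rabs d2))); lra).
  assert (Hxb : Rabs d2 * x <= PI / 2).
  { unfold x. pose proof (Rmin_r (e/2) (PI / (2 * Rabs d2))).
    apply Rmult_le_compat_l with (r := Rabs d2) in H0; [|lra].
    replace (Rabs d2 * (PI / (2 * Rabs d2))) with (PI / 2) in H0 by (field; lra). auto. }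
  clearbody x.
  destruct (K x ltac:(lra)) as [_ Hs].
  destruct (Rlt_or_le 0 d2) as [Hp|Hn].
  - rewrite Rabs_pos_eq in Hxb by lra.
    pose proof (sin_gt_0 (d2 * x) ltac:(nra) ltac:(lra)). lra.
  - rewrite Rabs_left in Hxb by lra.
    pose proof (sin_lt_0_var (d2 * x) ltac:(lra) ltac:(nra)). lra.
Qed.

Lemma Cexp_bounds x : exp (- Cnorm x) <= Cnorm (Cexp x) <= exp (Cnorm x).
Proof.
  rewrite Cnorm_Cexp. pose proof (fst_le x). pose proof (Rle_abs (fst x)). pose proof (Rabs_pos (fst x)). assert (- Rabs (fst x) <= fst x) by (pose proof (Rle_abs (- fst x)); rewrite Rabs_Ropp in *; lra). split; apply exp_le; lra.
Qed.

Definition seg (z0 d : CC) (l : R) := Cadd z0 (Cscal l d).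

Theorem mainTheorem9 (f : CC -> CC) (P : CC -> Prop) (omega : CC) :
  meromorphic_on_C f P ->
  (exists z, ~ P z /\ f z <> C0) ->
  omega <> C0 ->
  (forall (t : R) (z : CC),
     ~ P z -> f z <> C0 ->
     ~ P (Cadd z (Cscal t omega)) -> f (Cadd z (Cscal t omega)) <> C0 ->
     Cphase (f (Cadd z (Cscal t omega))) = Cphase (f z)) ->
  exists a b : CC, forall z : CC, ~ P z /\ f z = Cexp (Cadd (Cmul a z) b).
Proof.
  intros [Hdisc [Hdiff Hpole]] [z0 [Hz0P Hz0f]] Hw Hph.
  assert (HPh : PhaseHyp f P omega) by exact Hph.
  destruct (openU f P z0 Hdisc Hdiff Hz0P Hz0f) as [r0 [Hr0 HU0]].
  destruct (local_exp f P omega z0 r0 Hdiff HPh Hw Hr0 HU0) as [a0 Ha0].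
  set (G := fun u => Cmul (f z0) (Cexp (Cmul a0 (Csub u z0)))).
  set (T := fun w => exists r, 0 < r /\ forall u, Cnorm (Csub u w) < r -> ~ P u /\ f u = G u).
  assert (HGq : forall q p, G q = Cmul (G p) (Cexp (Cmul a0 (Csub q p)))).
  { intros q p. unfold G.
    replace (Cmul a0 (Csub q z0)) with (Cadd (Cmul a0 (Csub p z0)) (Cmul a0 (Csub q p))) by ceq.
    rewrite Cexp_add. ceq. }
  assert (Topen : forall x y r, 0 < r -> (forall u, Cnorm (Csub u x) < r -> ~ P u /\ f u = G u) ->
                  Cnorm (Csub y x) < r -> T y).
  { intros x y r Hr H Hy. exists (r - Cnorm (Csub y x)). split; [lra|].
    intros u Hu. apply H. pose proof (Cnorm_sub_tri u y x). lra. }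
  assert (Tz0 : T z0).
  { exists (r0 / 2). split; [lra|]. intros u Hu. split.
    - apply HU0; lra.
    - apply Ha0; auto. }
  assert (HT : forall w, T w).
  { intros w.
    remember (Csub w z0) as d eqn:Hd.
    set (Sset := fun l => 0 <= l <= 1 /\ forall m, 0 <= m <= l -> T (seg z0 d m)).
    assert (HS0 : Sset 0).
    { split; [lra|]. intros m Hm. replace m with 0 by lra.
      replace (seg z0 d 0) with z0 by (unfold seg; destruct z0; ceq). exact Tz0. }
    assert (Hbd : bound Sset) by (exists 1; intros x [Hx _]; lra).
    destruct (completeness Sset Hbd (ex_intro _ 0 HS0)) as [L [HLub HLl]].
    assert (HL0 : 0 <= L) by (apply HLub; exact HS0).
    assert (HL1 : L <= 1) by (apply HLl; intros x [Hx _]; lra).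
    assert (Kclose : forall eps, 0 < eps -> exists l, Sset l /\ L - eps < l <= L).
    { intros eps He. apply NNPP. intros Hn.
      assert (Hub : is_upper_bound Sset (L - eps)).
      { intros x Hx. apply Rnot_lt_le. intros Hlt. apply Hn. exists x. split; auto.
        }
      pose proof (HLl _ Hub). lra. }
    assert (Tbelow : forall m, 0 <= m < L -> T (seg z0 d m)).
    { intros m Hm. destruct (Kclose (L - m) ltac:(lra)) as [l [[Hl1 Hl2] Hl3]]. apply Hl2. lra. }
    assert (segdist : forall m1 m2, Cnorm (Csub (seg z0 d m1) (seg z0 d m2)) = Rabs (m1 - m2) * Cnorm d).
    { intros. rewrite <- Cnorm_scal. f_equal. unfold seg. ceq. }
    assert (segz0 : forall m, 0 <= m <= 1 -> Cnorm (Csub (seg z0 d m) z0) <= Cnorm d).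
    { intros m Hm. replace (Csub (seg z0 d m) z0) with (Cscal m d) by (unfold seg; destruct z0; ceq).
      rewrite Cnorm_scal. rewrite Rabs_pos_eq by lra. pose proof (Cnorm_nonneg d). nra. }
    remember (seg z0 d L) as p eqn:Hp.
    assert (Approx : forall eta, 0 < eta -> exists q, T q /\ Cnorm (Csub q p) < eta /\ Cnorm (Csub q z0) <= Cnorm d).
    { intros eta He. pose proof (Cnorm_nonneg d).
      destruct (Kclose (eta / (Cnorm d + 1))) as [l [[Hl1 Hl2] Hl3]]; [apply Rdiv_lt_0_compat; lra|].
      exists (seg z0 d l). split; [apply Hl2; lra|]. split.
      - rewrite Hp, segdist. rewrite Rabs_left1 by lra.
        assert (Hq : (L - l) * (Cnorm d + 1) < eta).
        { assert (L - l < eta / (Cnorm d + 1)) by lra.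
          apply (Rmult_lt_compat_r (Cnorm d + 1)) in H0; [|lra].
          replace (eta / (Cnorm d + 1) * (Cnorm d + 1)) with eta in H0 by (field; lra). auto. }
        nra.
      - apply segz0; lra. }
    remember (Cnorm (f z0) * exp (Cnorm a0 * Cnorm d)) as M eqn:HM.
    remember (Cnorm (f z0) * exp (- (Cnorm a0 * Cnorm d))) as m eqn:Hm.
    assert (HGb : forall q, Cnorm (Csub q z0) <= Cnorm d -> m <= Cnorm (G q) <= M).
    { intros q Hq. unfold G. rewrite Cnorm_mul.
      pose proof (Cexp_bounds (Cmul a0 (Csub q z0))) as [B1 B2].
      rewrite Cnorm_mul in B1, B2.
      pose proof (Cnorm_nonneg a0). pose proof (Cnorm_nonneg (f z0)).
      assert (Cnorm a0 * Cnorm (Csub q z0) <= Cnorm a0 * Cnorm d) by (apply Rmult_le_compat_l; auto).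
      pose proof (exp_le _ _ H1). pose proof (exp_le (- (Cnorm a0 * Cnorm d)) (- (Cnorm a0 * Cnorm (Csub q z0)))).
      rewrite HM, Hm. split; apply Rmult_le_compat_l; auto; lra. }
    assert (Tp : T p).
    { destruct (classic (P p)) as [HPp | HnPp].
      - exfalso. destruct (Hpole p HPp M) as [del [Hdel Hdp]].
        destruct (Approx del Hdel) as [q [[rq [Hrq Hq]] [Hqp Hqz]]].
        destruct (Hq q) as [HnPq Hfq]; [rewrite Csub_self, Cnorm_C0; auto|].
        assert (Hqp0 : 0 < Cnorm (Csub q p)).
        { destruct (Cnorm_nonneg (Csub q p)) as [|H0]; auto. exfalso.
          symmetry in H0. apply Cnorm_eq0 in H0.
          assert (q = p) by (destruct q, p; cunf; injection H0; intros; apply pair_eq; simpl; lra).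
          subst; auto. }
        pose proof (Hdp q (conj Hqp0 Hqp)) as H1. rewrite Hfq in H1. pose proof (HGb q Hqz). lra.
      - destruct (Hdiff p HnPp) as [lp Hlp].
        assert (Hm0 : 0 < m) by (rewrite Hm; apply Rmult_lt_0_compat; [apply Cnorm_pos; auto | apply exp_pos]).
        destruct (cd_cont f p lp Hlp m Hm0) as [del [Hdel Hc]].
        destruct (Approx del Hdel) as [q [[rq [Hrq Hq]] [Hqp Hqz]]].
        destruct (Hq q) as [HnPq Hfq]; [rewrite Csub_self, Cnorm_C0; auto|].
        assert (Hfp : f p <> C0).
        { intros H0. pose proof (Hc q Hqp) as H1. rewrite H0, Csub_C0, Hfq in H1.
          pose proof (HGb q Hqz). lra. }
        destruct (openU f P p Hdisc Hdiff HnPp Hfp) as [rp [Hrp HUp]].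
        destruct (local_exp f P omega p rp Hdiff HPh Hw Hrp HUp) as [ap Hap].
        destruct (Approx (rp/4) ltac:(lra)) as [q' [[rq' [Hrq' Hq']] [Hq'p _]]].
        destruct (Hq' q') as [_ Hfq']; [rewrite Csub_self, Cnorm_C0; auto|].
        assert (Hfq'2 : f q' = Cmul (f p) (Cexp (Cmul ap (Csub q' p)))) by (apply Hap; lra).
        assert (Hapa : ap = a0).
        { assert (He' : 0 < Rmin rq' (rp/4)) by (apply Rmin_pos; lra).
          assert (Hz : Csub ap a0 = C0).
          { apply (exp_unique _ _ He'). intros v Hv.
            pose proof (Rmin_l rq' (rp/4)); pose proof (Rmin_r rq' (rp/4)).
            assert (Hqv : Cnorm (Csub (Cadd q' v) q') = Cnorm v).
            { replace (Csub (Cadd q' v) q') with v by (destruct q', v; ceq). reflexivity. }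
            assert (Huq : Cnorm (Csub (Cadd q' v) q') < rq') by lra.
            assert (Hup : Cnorm (Csub (Cadd q' v) p) < rp / 2).
            { pose proof (Cnorm_sub_tri (Cadd q' v) q' p). lra. }
            pose proof (Hap _ Hup) as E1. destruct (Hq' _ Huq) as [_ E2].
            assert (E3 : Cmul (G q') (Cexp (Cmul ap v)) = Cmul (G q') (Cexp (Cmul a0 v))).
            { rewrite <- Hfq'. transitivity (f (Cadd q' v)).
              - rewrite E1, Hfq'2.
                replace (Cmul ap (Csub (Cadd q' v) p)) with (Cadd (Cmul ap (Csub q' p)) (Cmul ap v)) by ceq.
                rewrite Cexp_add. ceq.
              - rewrite E2, (HGq (Cadd q' v) q'), Hfq'.
                replace (Csub (Cadd q' v) q') with v by (destruct q', v; ceq). reflexivity. }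
            apply Cmul_cancel in E3; [| unfold G; apply Cmul_nz; [auto | apply Cexp_nz]].
            apply (Cmul_cancel (Cexp (Cmul a0 v))); [apply Cexp_nz|].
            rewrite <- Cexp_add.
            replace (Cadd (Cmul a0 v) (Cmul (Csub ap a0) v)) with (Cmul ap v) by ceq.
            rewrite E3. ceq. }
          destruct ap, a0. cunf. injection Hz; intros. apply pair_eq; simpl; lra. }
        subst ap.
        assert (Hfp2 : f p = G p).
        { apply (Cmul_cancel (Cexp (Cmul a0 (Csub q' p)))); [apply Cexp_nz|].
          transitivity (f q'); [rewrite Hfq'2; ceq|]. rewrite Hfq', (HGq q' p). ceq. }
        apply (Topen p p (rp/2)); [lra | | rewrite Csub_self, Cnorm_C0; lra].
        intros u Hu. split; [apply HUp; lra|]. rewrite (Hap u Hu), Hfp2, (HGq u p). reflexivity. }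
    assert (HL : L = 1).
    { destruct (Rle_lt_or_eq_dec L 1 HL1) as [Hlt|]; auto. exfalso.
      destruct Tp as [rp [Hrp Hup]].
      pose proof (Cnorm_nonneg d).
      assert (Hmin : 0 < Rmin (1 - L) (rp / (Cnorm d + 1))) by (apply Rmin_pos; [lra | apply Rdiv_lt_0_compat; lra]).
      pose proof (Rmin_l (1 - L) (rp / (Cnorm d + 1))) as Hmn1.
      pose proof (Rmin_r (1 - L) (rp / (Cnorm d + 1))) as Hmn2.
      remember (Rmin (1 - L) (rp / (Cnorm d + 1))) as mn eqn:Hmn.
      assert (HS : Sset (L + mn / 2)).
      { split; [lra|]. intros m' Hm'. destruct (Rlt_or_le m' L) as [HmL|HmL].
        - apply Tbelow; lra.
        - apply (Topen p _ rp Hrp Hup). rewrite Hp, segdist. rewrite Rabs_pos_eq by lra.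
          assert (Hq : (m' - L) * (Cnorm d + 1) < rp).
          { assert (Hx : m' - L < rp / (Cnorm d + 1)) by lra.
            apply (Rmult_lt_compat_r (Cnorm d + 1)) in Hx; [|lra].
            replace (rp / (Cnorm d + 1) * (Cnorm d + 1)) with rp in Hx by (field; lra). auto. }
          nra. }
      pose proof (HLub _ HS). lra. }
    subst L.
    replace w with p; auto. rewrite Hp, Hd. unfold seg. destruct w, z0; ceq. }
  destruct (Clog (f z0) Hz0f) as [b0 Hb0].
  exists a0, (Csub b0 (Cmul a0 z0)). intros w.
  destruct (HT w) as [r [Hr Hw']].
  destruct (Hw' w) as [Hnp Heq]; [rewrite Csub_self, Cnorm_C0; auto|].
  split; auto. rewrite Heq. unfold G. rewrite <- Hb0, <- Cexp_add. f_equal. ceq.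
Qed.
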